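(* Let $D\subset\mathbb{R}^n$ be a domain. For $z\in D$ let $\tau_D(Z)$ be the first exit time from $D$ of iterated Brownian motion $Z$ started at $z$, and $\tau_D(Z^1)$ the first exit time from $D$ of Brownian-time Brownian motion $Z^1$ started at $z$. Then for all $z\in D$ and all $t>0$, $$P_z[\tau_D(Z)>t]\le 2\,P_z[\tau_D(Z^1)>t].$$
   Context: Iterated Brownian motion started at $z$: with $X^+,X^-$ independent $n$-dimensional Brownian motions started at $0$ and $Y$ an independent one-dimensional Brownian motion started at $0$, set $X_t=X^+_t$ for $t\ge0$, $X_t=X^-_{-t}$ for $t<0$, and $Z_t=z+X(Y_t)$. Brownian-time Brownian motion started at $z$: with $X$ an $n$-dimensional Brownian motion started at $0$ and $Y$ an independent one-dimensional Brownian motion started at $0$, $Z^1_t=z+X(|Y_t|)$. For a process $W$, $\tau_D(W)=\inf\{t\ge0: W_t\notin D\}$. *)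

(* Defs.v *)
From HB Require Import structures.
From mathcomp Require Import all_boot all_order all_algebra.
From mathcomp Require Import all_classical all_reals all_analysis.
Set Implicit Arguments. Unset Strict Implicit. Unset Printing Implicit Defensive.
Import Order.TTheory GRing.Theory Num.Theory.
Import numFieldNormedType.Exports.
Local Open Scope classical_set_scope.
Local Open Scope ring_scope.

Section defs.
Context {d : measure_display} {T : measurableType d} {R : realType}.
Variable P : probability T R.

(* Mutual independence of a finite family of collections of events, via the
   sigma-algebras they generate: product rule for one event from each
   (taking some events = setT covers all subfamilies). *)
Definition indep_family (I : finType) (G : I -> set (set T)) : Prop :=
  forall E : I -> set T, (forall i, <<s G i >> (E i)) ->
    fine (P (\bigcap_(i in [set: I]) E i)) = \prod_(i : I) fine (P (E i)).

Definition rv_gen (X : T -> R) : set (set T) :=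
  [set E | exists A : set R, measurable A /\ E = X @^-1` A].

Definition proc_gen (X : R -> T -> R) : set (set T) :=
  [set E | exists t (A : set R), 0 <= t /\ measurable A /\ E = X t @^-1` A].

Definition vproc_gen (n : nat) (X : 'I_n -> R -> T -> R) : set (set T) :=
  [set E | exists i t (A : set R), 0 <= t /\ measurable A /\ E = X i t @^-1` A].

Definition is_BM1 (B : R -> T -> R) : Prop :=
  [/\ (forall w, B 0 w = 0),
      (forall t, 0 <= t -> measurable_fun setT (B t)),
      (forall w, {within `[0, +oo[, continuous (fun t => B t w)}),
      (forall s t, 0 <= s -> s < t -> forall A : set R, measurable A ->
          P ((fun w => B t w - B s w) @^-1` A) =
          normal_prob 0 (Num.sqrt (t - s)) A) &
      (forall (k : nat) (ts : nat -> R), 0 <= ts 0%N ->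
          (forall i, (i < k)%N -> ts i < ts i.+1) ->
          indep_family (fun j : 'I_k =>
             rv_gen (fun w => B (ts j.+1) w - B (ts j) w)))].

Definition is_BM (n : nat) (X : 'I_n -> R -> T -> R) : Prop :=
  (forall i, is_BM1 (X i)) /\ indep_family (fun i => proc_gen (X i)).

Definition vec_at (n : nat) (X : 'I_n -> R -> T -> R) (s : R) (w : T)
  : 'rV[R]_n := \row_i X i s w.

Definition iterated_BM (n : nat) (Xp Xm : 'I_n -> R -> T -> R)
  (Y : R -> T -> R) (z : 'rV[R]_n) (t : R) (w : T) : 'rV[R]_n :=
  z + (if 0 <= Y t w then vec_at Xp (Y t w) w else vec_at Xm (- Y t w) w).

Definition BTBM (n : nat) (X : 'I_n -> R -> T -> R)
  (Y : R -> T -> R) (z : 'rV[R]_n) (t : R) (w : T) : 'rV[R]_n :=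
  z + vec_at X `|Y t w| w.

End defs.

Definition exit_time {T : Type} {R : realType} {V : Type} (D : set V)
  (W : R -> T -> V) (w : T) : \bar R :=
  ereal_inf [set t%:E | t in [set t : R | 0 <= t /\ ~ D (W t w)]].

Definition survives {T : Type} {R : realType} {V : Type} (D : set V)
  (W : R -> T -> V) (t : R) : set T :=
  [set w | (t%:E < exit_time D W w)%E].

(* Main.v *)
Require Import Defs.
From HB Require Import structures.
From mathcomp Require Import all_boot all_order all_algebra.
From mathcomp Require Import all_classical all_reals all_analysis.
Set Implicit Arguments. Unset Strict Implicit. Unset Printing Implicit Defensive.
Import Order.TTheory GRing.Theory Num.Theory.
Import numFieldNormedType.Exports.
Local Open Scope classical_set_scope.
Local Open Scope ring_scope.
From mathcomp Require Import ring lra measurable_realfun.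

Section partA.
Variable R : realType.

Lemma cont_eps (A : set R) (f : R -> R) : {within A, continuous f} ->
  forall x, A x -> forall e, 0 < e ->
  exists2 d, 0 < d & forall y, A y -> `|x - y| < d -> `|f x - f y| < e.
Proof.
move=> /subspace_continuousP cf x Ax e e0.
have /cvgrPdist_lt /(_ e e0) := cf x Ax.
rewrite near_withinE => /nbhs_ballP [d /= d0 H].
by exists d => // y Ay xy; apply: H.
Qed.

Lemma fin_delta (I : finType) (Q : I -> R -> Prop) :
  (forall i d d', 0 < d' -> d' <= d -> Q i d -> Q i d') ->
  (forall i, exists2 d, 0 < d & Q i d) -> exists2 d, 0 < d & forall i, Q i d.
Proof.
move=> mono H.
suff: forall s : seq I, exists2 d, 0 < d & forall i, i \in s -> Q i d.
  move=> /(_ (enum I)) [d d0 Hd]; exists d => // i; apply: Hd; rewrite mem_enum.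
  by [].
elim=> [|a s [d d0 IH]]; first by exists 1.
have [da da0 Qa] := H a.
have m0 : 0 < Num.min d da by rewrite lt_min d0 da0.
exists (Num.min d da) => // i; rewrite inE => /orP[/eqP->|iS].
- by apply: mono Qa => //; rewrite ge_min lexx orbT.
- by apply: mono (IH _ iS) => //; rewrite ge_min lexx.
Qed.

Definition box n (x : 'rV[R]_n) (e : R) : set 'rV[R]_n :=
  [set y | forall i, `|x ord0 i - y ord0 i| < e].

Lemma open_box n (D : set 'rV[R]_n) x : open D -> D x ->
  exists2 e, 0 < e & box x e `<=` D.
Proof.
move=> oD Dx; have := oD x Dx.
move=> /nbhs_ballP [e e0 H]; exists e => // y bxy; apply: H.
by split => // i j; rewrite (ord1 i); exact: bxy j.
Qed.

Lemma margin n (D : set 'rV[R]_n) (F : R -> 'rV[R]_n) a b :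
  open D -> a <= b ->
  (forall s, a <= s <= b -> D (F s)) ->
  (forall s, a <= s <= b -> forall e, 0 < e -> exists2 d, 0 < d &
      forall s', a <= s' <= b -> `|s - s'| < d ->
        forall i, `|F s ord0 i - F s' ord0 i| < e) ->
  exists2 e, 0 < e & forall s, a <= s <= b -> box (F s) e `<=` D.
Proof.
move=> oD ab DF cF.
pose Q c := exists2 e, 0 < e & forall s, a <= s <= c -> box (F s) e `<=` D.
pose E := [set c | a <= c <= b /\ Q c].
have Ea : E a.
  split; first by rewrite lexx ab.
  have [e e0 He] := open_box oD (DF a ltac:(by rewrite lexx ab)).
  exists e => // s /andP[aS sa]; have -> : s = a by apply/eqP; rewrite eq_le sa aS.
  exact: He.
have hs : has_sup E.
  by split; [exists a | exists b => c [/andP[_ ->]]].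
set c := sup E.
have ac : a <= c by apply: sup_upper_bound.
have cb : c <= b by apply: sup_le_ub; [exists a | move=> x [/andP[_ ->]]].
have acb : a <= c <= b by rewrite ac cb.
have [ec ec0 Hc] := open_box oD (DF c acb).
have ec20 : 0 < ec / 2 by rewrite divr_gt0.
have [del del0 Hdel] := cF c acb _ ec20.
have [c0 [/andP[ac0 c0b] [e0 e00 He0]] cc0] := sup_adherent del0 hs.
pose c1 := Num.min b (c + del / 2).
have me0 : 0 < Num.min e0 (ec / 2) by rewrite lt_min e00 ec20.
have Ec1 : E c1.
  split.
    rewrite /c1 ge_min lexx /= le_min ab /=.
    by rewrite (le_trans ac) // lerDl divr_ge0 // ltW.
  exists (Num.min e0 (ec / 2)) => // s /andP[aS sc1] y bsy.
  have sb : s <= b by move: sc1; rewrite /c1 le_min => /andP[].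
  have scd : s <= c + del / 2 by move: sc1; rewrite /c1 le_min => /andP[].
  case: (leP s c0) => [sc0|c0s].
  - apply: (He0 s); first by rewrite aS sc0.
    move=> i; apply: lt_le_trans (bsy i) _; by rewrite ge_min lexx.
  - apply: Hc => i.
    have cs : `|c - s| < del.
      move: cc0 c0s scd del0; rewrite -/c => ? ? ? ?; rewrite ltr_norml; apply/andP; split; lra.
    have := Hdel s ltac:(by rewrite aS sb) cs i.
    have := bsy i; rewrite lt_min => /andP[_ h2] h1.
    have := ler_normD (F c ord0 i - F s ord0 i) (F s ord0 i - y ord0 i).
    rewrite addrA subrK => h3.
    apply: le_lt_trans h3 _.
    have -> : ec = ec / 2 + ec / 2 by field.
    exact: ltrD.
have c1c : c1 <= c by apply: sup_upper_bound.
have bc : b <= c.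
  rewrite leNgt; apply/negP => cb'.
  move: c1c; rewrite /c1 ge_min => /orP[|]; lra.
have [_ [e e0' He]] := Ec1.
exists e => // s /andP[aS sb]; apply: He; rewrite aS /=.
rewrite /c1 le_min; apply/andP; split => //; lra.
Qed.


Lemma pow2_gt0 m : 0 < (2:R) ^+ m.
Proof. by rewrite exprn_gt0. Qed.

Lemma pow2_big (x : R) : exists k, x < 2 ^+ k.
Proof.
exists (Num.trunc x).+1.
apply: lt_le_trans (truncnS_gt x) _.
rewrite -natrX ler_nat; apply: ltnW; exact: ltn_expl.
Qed.

Definition dy (m j : nat) : R := j%:R / 2 ^+ m.

Lemma dy_ge0 m j : 0 <= dy m j.
Proof. by rewrite /dy divr_ge0 // ltW // pow2_gt0. Qed.

Lemma dy_dense a b : 0 <= a -> a < b -> exists m j, a < dy m j < b.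
Proof.
move=> a0 ab.
have [m hm] := pow2_big ((b - a)^-1).
have p0 := pow2_gt0 m.
set p := (2:R) ^+ m in hm p0 *.
have ap0 : 0 <= a * p by rewrite mulr_ge0 // ltW.
have /andP[h1 h2] := truncn_itv ap0.
exists m, (Num.trunc (a * p)).+1; rewrite /dy -/p.
rewrite ltr_pdivlMr // ltr_pdivrMr // h2 /=.
have ba0 : 0 < b - a by rewrite subr_gt0.
have h3 : 1 < (b - a) * p.
  by rewrite -(ltr_pdivrMl _ _ ba0) mulr1.
apply: (@le_lt_trans _ _ (a * p + 1)).
  by rewrite -natr1 lerD2r.
by move: h3; rewrite mulrBl; lra.
Qed.

Lemma dy_grid m j : dy m j = dy (m + j) (j * 2 ^ j).
Proof.
rewrite /dy natrM natrX exprD; field.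
by apply/andP; split; rewrite expf_neq0.
Qed.

Definition gq n k (q : {ffun 'I_n -> int}) : 'rV[R]_n :=
  \row_i ((q i)%:~R / 2 ^+ k).

Lemma grid_approx n k (x : 'rV[R]_n) : exists q : {ffun 'I_n -> int},
  forall i, `|x ord0 i - gq k q ord0 i| < (2 ^+ k)^-1.
Proof.
exists [ffun i => Num.floor (x ord0 i * 2 ^+ k)] => i.
rewrite /gq mxE ffunE.
have p0 := pow2_gt0 k.
set p := (2:R) ^+ k in p0 *.
have /andP[h1 h2] := floor_itv (x ord0 i * p).
rewrite intrD in h2.
set f := ((Num.floor (x ord0 i * p))%:~R : R) in h1 h2 *.
have -> : x ord0 i - f / p = (x ord0 i * p - f) / p by field; rewrite gt_eqF.
have pi0 : 0 < p^-1 by rewrite invr_gt0.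
rewrite normrM [`|p^-1|]ger0_norm ?(ltW pi0) //.
rewrite -[X in _ < X]mul1r ltr_pM2r //.
have e1 : (1%:~R : R) = 1 by [].
rewrite e1 in h2.
rewrite ger0_norm ?subr_ge0 //; lra.
Qed.

Definition good n (D : set 'rV[R]_n) k (x : 'rV[R]_n) :=
  forall q : {ffun 'I_n -> int},
    (forall i, `|x ord0 i - gq k q ord0 i| < (2 ^+ k)^-1) ->
    box (gq k q) (2 * (2 ^+ k)^-1) `<=` D.

Lemma norm_tri3 (a b c : R) : `|a - c| <= `|a - b| + `|b - c|.
Proof. by have := ler_normD (a - b) (b - c); rewrite addrA subrK. Qed.

Lemma good_of_margin n (D : set 'rV[R]_n) k x :
  box x (3 * (2 ^+ k)^-1) `<=` D -> good D k x.
Proof.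
move=> bD q hq y hy; apply: bD => i.
apply: le_lt_trans (norm_tri3 _ (gq k q ord0 i) _) _.
have := hq i; have := hy i; lra.
Qed.

Lemma good_near n (D : set 'rV[R]_n) k (x x' : 'rV[R]_n) :
  good D k x' -> (forall i, `|x' ord0 i - x ord0 i| < (2 ^+ k)^-1) -> D x.
Proof.
move=> g hx; have [q hq] := grid_approx k x'.
apply: (g q hq) => i.
apply: le_lt_trans (norm_tri3 _ (x' ord0 i) _) _.
rewrite distrC; have := hq i; have := hx i; lra.
Qed.

Lemma margin_k (e : R) : 0 < e -> exists k, 3 * (2 ^+ k)^-1 <= e.
Proof.
move=> e0; have [k hk] := pow2_big (3 / e); exists k.
have p0 := pow2_gt0 k.
rewrite ler_pdivrMr // mulrC -ler_pdivrMr //.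
exact: ltW.
Qed.

End partA.

Lemma surv_in {T : Type} {R : realType} {V : Type} (D : set V)
  (W : R -> T -> V) (t : R) w :
  w \in survives D W t \/ survives D W t w ->
  forall u, 0 <= u <= t -> D (W u w).
Proof.
move=> h u /andP[u0 ut]; apply/not_notP => Du.
have {}h : (t%:E < exit_time D W w)%E by case: h => // /set_mem.
have : (exit_time D W w <= u%:E)%E.
  by apply: ereal_inf_lbound; exists u.
move=> h2; have := lt_le_trans h h2; rewrite lte_fin; lra.
Qed.

Lemma surv_of {T : Type} {R : realType} {V : Type} (D : set V)
  (W : R -> T -> V) (t del : R) w : 0 < del ->
  (forall u, 0 <= u <= t + del -> D (W u w)) -> survives D W t w.
Proof.
move=> d0 h; rewrite /survives /=.
apply: (@lt_le_trans _ _ (t + del)%:E); first by rewrite lte_fin; lra.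
apply: le_ereal_inf_tmp => _ [s [s0 Ds] <-].
rewrite lee_fin; rewrite leNgt; apply/negP => st; apply: Ds; apply: h.
by rewrite s0 ltW.
Qed.

Section partB.
Variables (R : realType) (n : nat).

Definition Om := option 'I_n -> R -> R.
Definition KK m := (4 ^ m)%N.
Definition incr (w : Om) c m j := w c (dy R m j.+1) - w c (dy R m j).
Definition rectset (A0 : option 'I_n -> set R) (A : option 'I_n -> nat -> set R) m
  : set Om :=
  [set w | forall c, A0 c (w c 0) /\ forall j, (j < KK m)%N -> A c j (incr w c m j)].
Definition rect m : set (set Om) :=
  [set E | exists A0 A, (forall c, measurable (A0 c)) /\
     (forall c j, measurable (A c j)) /\ E = rectset A0 A m].
Definition SS m := <<s rect m >>.
Definition UU : set (set Om) := [set E | exists m, SS m E].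


Lemma rect_setI m : setI_closed (rect m).
Proof.
move=> _ _ [A0 [A [mA0 [mA ->]]]] [B0 [B [mB0 [mB ->]]]].
exists (fun c => A0 c `&` B0 c), (fun c j => A c j `&` B c j); split.
  by move=> c; apply: measurableI.
split; first by move=> c j; apply: measurableI.
apply/seteqP; split => w /=.
- move=> [h1 h2] c; have [a1 a2] := h1 c; have [b1 b2] := h2 c.
  by split => // j jK; split; [apply: a2 | apply: b2].
- move=> h; split => c; have [[a1 b1] h2] := h c; split => // j jK;
  by have [] := h2 j jK.
Qed.

Local Notation M m := (g_sigma_algebraType (rect m)).

Lemma coord0_meas m c : measurable_fun setT (fun w : M m => w c 0).
Proof.
move=> _ A mA; rewrite setTI; apply: sub_sigma_algebra.
exists (fun c' => if c' == c then A else setT), (fun _ _ => setT); split.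
  by move=> c'; case: ifP.
split => //; apply/seteqP; split => w /=.
- by move=> Aw c'; case: ifP => [/eqP->|] //.
- by move=> /(_ c) []; rewrite eqxx.
Qed.

Lemma incr_meas m c j : (j < KK m)%N ->
  measurable_fun setT (fun w : M m => incr w c m j).
Proof.
move=> jK _ A mA; rewrite setTI; apply: sub_sigma_algebra.
exists (fun _ => setT), (fun c' j' => if (c' == c) && (j' == j) then A else setT).
split => //; split; first by move=> c' j'; case: ifP.
apply/seteqP; split => w /=.
- move=> Aw c'; split => // j' _; case: ifP => // /andP[/eqP-> /eqP->] //.
- by move=> /(_ c) [_ /(_ j jK)]; rewrite !eqxx.
Qed.

Lemma val_meas m c i : (i <= KK m)%N ->
  measurable_fun setT (fun w : M m => w c (dy R m i)).
Proof.
elim: i => [_|i IH iK].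
  have -> : dy R m 0 = 0 by rewrite /dy mul0r.
  exact: coord0_meas.
have -> : (fun w : M m => w c (dy R m i.+1)) =
    (fun w : M m => w c (dy R m i) + incr w c m i).
  by apply/funext => w; rewrite /incr addrC subrK.
apply: measurable_funD; first by apply: IH; apply: ltnW.
exact: incr_meas.
Qed.


Lemma mfun_pre {d} {T : measurableType d} (f : T -> R) (A : set R) :
  measurable_fun setT f -> measurable A -> measurable (f @^-1` A).
Proof. by move=> mf mA; rewrite -[_ @^-1` _]setTI; apply: mf. Qed.

Lemma dy_lift m m' j : (m <= m')%N -> dy R m j = dy R m' (j * 2 ^ (m' - m)).
Proof.
move=> mm'; have [k ->] : exists k, m' = (m + k)%N by exists (m' - m)%N; rewrite subnKC.
rewrite addKn /dy natrM natrX exprD; field.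
by apply/andP; split; rewrite expf_neq0.
Qed.

Lemma bnd_lift i m m' : (i <= KK m)%N -> (m <= m')%N -> (i * 2 ^ (m' - m) <= KK m')%N.
Proof.
move=> iK mm'; have [k ->] : exists k, m' = (m + k)%N by exists (m' - m)%N; rewrite subnKC.
rewrite addKn /KK expnD; apply: leq_mul => //.
by rewrite (_ : 4 = 2 * 2)%N // expnMn leq_pmulr // expn_gt0.
Qed.

Lemma rectset_eq A0 A m : rectset A0 A m =
  \bigcap_(c in [set: option 'I_n]) ([set w : Om | A0 c (w c 0)] `&`
     \bigcap_(j in `I_(KK m)) [set w : Om | A c j (incr w c m j)]).
Proof.
apply/seteqP; split => w /=.
- move=> h c _; have [h1 h2] := h c; split => // j jK; exact: h2.
- by move=> h c; have [h1 h2] := h c I; split => // j jK; exact: h2.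
Qed.

Lemma rect_in_SS m m' : (m <= m')%N -> rect m `<=` SS m'.
Proof.
move=> mm' _ [A0 [A [mA0 [mA ->]]]].
suff : measurable (rectset A0 A m : set (M m')) by [].
rewrite rectset_eq; apply: fin_bigcap_measurable; first exact: finite_finset.
move=> c _; apply: measurableI.
  exact: (mfun_pre (coord0_meas (m:=m') c) (mA0 c)).
apply: fin_bigcap_measurable; first exact: finite_II.
move=> j /= jK; apply: mfun_pre (mA _ _).
have -> : (fun w : M m' => incr w c m j) = (fun w : M m' =>
   w c (dy R m' (j.+1 * 2 ^ (m' - m))) - w c (dy R m' (j * 2 ^ (m' - m)))).
  by apply/funext => w; rewrite /incr -!dy_lift.
apply: measurable_funB; apply: val_meas; apply: bnd_lift => //.
exact: ltnW.
Qed.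

Lemma SS_mono m m' : (m <= m')%N -> SS m `<=` SS m'.
Proof.
move=> mm'; apply: smallest_sub; first exact: smallest_sigma_algebra.
exact: rect_in_SS.
Qed.

Lemma UU_setI : setI_closed UU.
Proof.
move=> E1 E2 [m1 h1] [m2 h2]; exists (maxn m1 m2).
have h1' := SS_mono (leq_maxl m1 m2) h1.
have h2' := SS_mono (leq_maxr m1 m2) h2.
suff : measurable (E1 `&` E2 : set (M (maxn m1 m2))) by [].
exact: measurableI.
Qed.

Lemma coord_UU c m j (A : set R) : measurable A ->
  <<s UU >> [set w : Om | A (w c (dy R m j))].
Proof.
move=> mA; apply: sub_sigma_algebra; exists (m + j)%N.
rewrite (dy_lift j (leq_addr j m)) addKn.
suff : measurable ((fun w : M (m + j) => w c (dy R (m + j) (j * 2 ^ j))) @^-1` A)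
  by [].
apply: mfun_pre mA; apply: val_meas.
rewrite /KK expnD (_ : 4 = 2 * 2)%N // !expnMn.
have h1 : (j <= 2 ^ j)%N by exact: ltnW (ltn_expl j (ltnSn 1)).
apply: (leq_trans (leq_mul h1 (leqnn _))).
by apply: leq_pmull; rewrite muln_gt0 !expn_gt0.
Qed.

End partB.

Section law.
Variable R : realType.

Definition same_law {d1 d2} {T1 : measurableType d1} {T2 : measurableType d2}
  (P1 : probability T1 R) (P2 : probability T2 R) {O : Type}
  (F1 : T1 -> O) (F2 : T2 -> O) (E : set O) :=
  measurable (F1 @^-1` E) /\ measurable (F2 @^-1` E) /\
  P1 (F1 @^-1` E) = P2 (F2 @^-1` E).

Lemma law_ext {d1 d2} {T1 : measurableType d1} {T2 : measurableType d2}
  (P1 : probability T1 R) (P2 : probability T2 R) {O : Type}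
  (G : set (set O)) (F1 : T1 -> O) (F2 : T2 -> O) :
  setI_closed G -> (forall E, G E -> same_law P1 P2 F1 F2 E) ->
  forall E, <<s G >> E -> same_law P1 P2 F1 F2 E.
Proof.
move=> GI HG E; apply: (lambda_system_subset GI) => //.
split => //.
- by rewrite /same_law !preimage_setT !probability_setT; split.
- move=> A B BA [mA1 [mA2 eA]] [mB1 [mB2 eB]].
  split; first exact: measurableD.
  split; first exact: measurableD.
  have f1 : (P1 (F1 @^-1` A) < +oo)%E by apply: (le_lt_trans (probability_le1 P1 mA1)); rewrite ltry.
  have f2 : (P2 (F2 @^-1` A) < +oo)%E by apply: (le_lt_trans (probability_le1 P2 mA2)); rewrite ltry.
  rewrite (@measureD _ _ _ P1 (F1 @^-1` A) (F1 @^-1` B)) //.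
  rewrite (@measureD _ _ _ P2 (F2 @^-1` A) (F2 @^-1` B)) //.
  have e1 : F1 @^-1` A `&` F1 @^-1` B = F1 @^-1` B.
    by apply/seteqP; split => x /= => [[]//|Bx]; split => //; exact: BA.
  have e2 : F2 @^-1` A `&` F2 @^-1` B = F2 @^-1` B.
    by apply/seteqP; split => x /= => [[]//|Bx]; split => //; exact: BA.
  rewrite e1 e2; congr (_ - _)%E; [exact: eA | exact: eB].
- move=> F ndF hF.
  have m1 : forall i, measurable (F1 @^-1` F i) by move=> i; case: (hF i).
  have m2 : forall i, measurable (F2 @^-1` F i) by move=> i; case: (hF i) => _ [].
  have nd1 : {homo (fun i => F1 @^-1` F i) : a b / (a <= b)%N >-> (a <= b)%O}.
    by move=> a b ab; apply/subsetPset; apply: preimage_subset; apply/subsetPset; exact: ndF.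
  have nd2 : {homo (fun i => F2 @^-1` F i) : a b / (a <= b)%N >-> (a <= b)%O}.
    by move=> a b ab; apply/subsetPset; apply: preimage_subset; apply/subsetPset; exact: ndF.
  rewrite /same_law !preimage_bigcup.
  have M1 : measurable (\bigcup_i (F1 @^-1` F i)) by apply: bigcupT_measurable.
  have M2 : measurable (\bigcup_i (F2 @^-1` F i)) by apply: bigcupT_measurable.
  split => //; split => //.
  have c1 := nondecreasing_cvg_mu (mu := P1) m1 M1 nd1.
  have c2 := nondecreasing_cvg_mu (mu := P2) m2 M2 nd2.
  rewrite (_ : _ \o _ = P2 \o (fun i => F2 @^-1` F i)) in c1; last first.
    by apply/funext => i /=; case: (hF i) => _ [].
  by apply: (@cvg_unique _ (@ereal_hausdorff R) _ _ _ _ c1 c2); apply: fmap_proper_filter.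
Qed.

End law.

Section bm.
Variables (R : realType) (n : nat).
Local Notation Om := (Om R n).

Definition Phi {T : Type} (X : 'I_n -> R -> T -> R) (Y : R -> T -> R) : T -> Om :=
  fun w c s => match c with Some i => X i s w | None => Y s w end.

Definition Einc {T : Type} (B : R -> T -> R) m (A : nat -> set R) : set T :=
  \bigcap_(j in [set: 'I_(KK m)]) [set w | A j (B (dy R m j.+1) w - B (dy R m j) w)].

Lemma gen_coord_meas (T : pointedType) (G : set (set T)) (B : R -> T -> R) s :
  (forall A, measurable A -> G (B s @^-1` A)) ->
  measurable_fun setT (B s : g_sigma_algebraType G -> R).
Proof.
move=> h _ A mA; rewrite setTI; apply: sub_sigma_algebra; exact: h.
Qed.

Lemma Einc_gen (T : pointedType) (G : set (set T)) (B : R -> T -> R) m A :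
  (forall s A', 0 <= s -> measurable A' -> G (B s @^-1` A')) ->
  (forall j, measurable (A j)) -> <<s G >> (Einc B m A).
Proof.
move=> hG mA.
suff : measurable (Einc B m A : set (g_sigma_algebraType G)) by [].
apply: fin_bigcap_measurable; first exact: finite_finset.
move=> j _; apply: (mfun_pre _ (mA j)).
by apply: measurable_funB; apply: gen_coord_meas => A' mA'; apply: hG => //;
  apply: dy_ge0.
Qed.

Lemma gen_sub_meas d (T : measurableType d) (G : set (set T)) :
  G `<=` measurable -> <<s G >> `<=` measurable.
Proof. by move=> h; apply: smallest_sub => //; exact: sigma_algebra_measurable. Qed.

Lemma Pfin d (T : measurableType d) (P : probability T R) A :
  measurable A -> P A = (fine (P A))%:E.
Proof. by move=> mA; rewrite fineK // fin_num_measure. Qed.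

Lemma bm1_incr_prob d (T : measurableType d) (P : probability T R)
  (B : R -> T -> R) m (A : nat -> set R) : is_BM1 P B -> (forall j, measurable (A j)) ->
  fine (P (Einc B m A)) =
  \prod_(j < KK m) fine (normal_prob 0 (Num.sqrt (dy R m j.+1 - dy R m j)) (A j)).
Proof.
case=> B0 Bm Bc Bn Bi mA.
have inc : forall i, (i < KK m)%N -> dy R m i < dy R m i.+1.
  move=> i _; rewrite /dy ltr_pM2r ?ltr_nat // invr_gt0; exact: pow2_gt0.
have := Bi (KK m) (dy R m) (dy_ge0 _ _ _) inc (fun j => [set w | A j (B (dy R m j.+1) w - B (dy R m j) w)]).
move=> h; rewrite /Einc h; last first.
  by move=> j; apply: sub_sigma_algebra; exists (A j).
apply: eq_bigr => j _; rewrite -Bn ?dy_ge0 //; exact: (inc j (ltn_ord j)).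
Qed.


Definition indep2 d (T : measurableType d) (P : probability T R)
  (X : 'I_n -> R -> T -> R) (Y : R -> T -> R) :=
  forall E1 E2, <<s vproc_gen X >> E1 -> <<s proc_gen Y >> E2 ->
  fine (P (E1 `&` E2)) = fine (P E1) * fine (P E2).

Definition FA m (A : nat -> set R) :=
  \prod_(j < KK m) fine (normal_prob 0 (Num.sqrt (dy R m j.+1 - dy R m j)) (A j)).

Lemma rect_pre0 {T : Type} (X : 'I_n -> R -> T -> R) (Y : R -> T -> R)
  (A0 : option 'I_n -> set R) A m :
  (forall w, Y 0 w = 0) -> (forall i w, X i 0 w = 0) ->
  ~ (forall c, A0 c 0) -> Phi X Y @^-1` rectset A0 A m = set0.
Proof.
move=> Y0 X0 h; apply/seteqP; split => w //= H; apply: h => c.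
have [h1 _] := H c; move: h1; case: c => [i|] /=; [by rewrite X0 | by rewrite Y0].
Qed.

Lemma rect_pre1 {T : Type} (X : 'I_n -> R -> T -> R) (Y : R -> T -> R)
  (A0 : option 'I_n -> set R) A m :
  (forall w, Y 0 w = 0) -> (forall i w, X i 0 w = 0) ->
  (forall c, A0 c 0) -> Phi X Y @^-1` rectset A0 A m =
  (\bigcap_(i in [set: 'I_n]) Einc (X i) m (A (Some i))) `&` Einc Y m (A None).
Proof.
move=> Y0 X0 h; apply/seteqP; split => w /=.
- move=> H; split.
  + move=> i _ j _ /=; have [_ h2] := H (Some i); exact: (h2 j (ltn_ord j)).
  + move=> j _ /=; have [_ h2] := H None; exact: (h2 j (ltn_ord j)).
- move=> [H1 H2] [i|]; split.
  + by rewrite /= X0; apply: h.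
  + by move=> j jK; exact: (H1 i I (Ordinal jK) I).
  + by rewrite /= Y0; apply: h.
  + by move=> j jK; exact: (H2 (Ordinal jK) I).
Qed.

Lemma EX_gen d (T : measurableType d) (X : 'I_n -> R -> T -> R) m (A : option 'I_n -> nat -> set R) :
  (forall c j, measurable (A c j)) ->
  <<s vproc_gen X >> (\bigcap_(i in [set: 'I_n]) Einc (X i) m (A (Some i))).
Proof.
move=> mA.
suff : measurable (\bigcap_(i in [set: 'I_n]) Einc (X i) m (A (Some i))
   : set (g_sigma_algebraType (vproc_gen X))) by [].
apply: fin_bigcap_measurable; first exact: finite_finset.
move=> i _; apply: Einc_gen => // s A' s0 mA'; by exists i, s, A'.
Qed.

Lemma EY_gen d (T : measurableType d) (Y : R -> T -> R) m (A : option 'I_n -> nat -> set R) :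
  (forall c j, measurable (A c j)) -> <<s proc_gen Y >> (Einc Y m (A None)).
Proof.
move=> mA; apply: Einc_gen => // s A' s0 mA'; by exists s, A'.
Qed.

Lemma vproc_meas d (T : measurableType d) (P : probability T R) (X : 'I_n -> R -> T -> R) :
  is_BM P X -> vproc_gen X `<=` measurable.
Proof.
move=> [hX _] _ [i [s [A [s0 [mA ->]]]]].
by case: (hX i) => _ Xm _ _ _; apply: mfun_pre => //; apply: Xm.
Qed.

Lemma proc_meas d (T : measurableType d) (P : probability T R) Y :
  is_BM1 P Y -> proc_gen Y `<=` measurable.
Proof.
move=> [_ Ym _ _ _] _ [s [A [s0 [mA ->]]]].
by apply: mfun_pre => //; apply: Ym.
Qed.

Lemma rect_pre_meas d (T : measurableType d) (P : probability T R) X Y A0 A m :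
  is_BM P X -> is_BM1 P Y -> (forall c j, measurable (A c j)) ->
  measurable (Phi X Y @^-1` rectset A0 A m).
Proof.
move=> hX hY mA.
have Y0 : forall w, Y 0 w = 0 by case: hY.
have X0 : forall i w, X i 0 w = 0 by move=> i; case: (hX.1 i).
case: (pselect (forall c, A0 c 0)) => h; last by rewrite rect_pre0.
rewrite rect_pre1 //; apply: measurableI.
- by apply: (gen_sub_meas (vproc_meas hX)); exact: EX_gen.
- by apply: (gen_sub_meas (proc_meas hY)); exact: EY_gen.
Qed.

Lemma rect_prob1 d (T : measurableType d) (P : probability T R) X Y A0 A m :
  is_BM P X -> is_BM1 P Y -> indep2 P X Y -> (forall c j, measurable (A c j)) ->
  (forall c, A0 c 0) ->
  P (Phi X Y @^-1` rectset A0 A m) =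
  ((\prod_(i < n) FA m (A (Some i))) * FA m (A None))%:E.
Proof.
move=> hX hY hI mA h.
have Y0 : forall w, Y 0 w = 0 by case: hY.
have X0 : forall i w, X i 0 w = 0 by move=> i; case: (hX.1 i).
have mpre := rect_pre_meas A0 m hX hY mA.
rewrite (Pfin P mpre); congr EFin.
rewrite rect_pre1 // hI; last 2 first.
- exact: EX_gen.
- exact: EY_gen.
congr (_ * _); last exact: bm1_incr_prob.
rewrite (hX.2 (fun i => Einc (X i) m (A (Some i)))); last first.
  move=> i; apply: Einc_gen => // s A' s0 mA'; by exists s, A'.
apply: eq_bigr => i _; exact: (bm1_incr_prob m (hX.1 i) (mA _)).

Qed.


Lemma law_UU d1 (T1 : measurableType d1) (P1 : probability T1 R) X1 Y1
  d2 (T2 : measurableType d2) (P2 : probability T2 R) X2 Y2 :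
  is_BM P1 X1 -> is_BM1 P1 Y1 -> indep2 P1 X1 Y1 ->
  is_BM P2 X2 -> is_BM1 P2 Y2 -> indep2 P2 X2 Y2 ->
  forall E, <<s @UU R n >> E -> same_law P1 P2 (Phi X1 Y1) (Phi X2 Y2) E.
Proof.
move=> hX1 hY1 hI1 hX2 hY2 hI2.
apply: law_ext; first exact: UU_setI.
move=> E [m hE].
rewrite /SS in hE; move: E hE; apply: law_ext; first exact: rect_setI.
move=> _ [A0 [A [mA0 [mA ->]]]].
have Y10 : forall w, Y1 0 w = 0 by case: hY1.
have X10 : forall i w, X1 i 0 w = 0 by move=> i; case: (hX1.1 i).
have Y20 : forall w, Y2 0 w = 0 by case: hY2.
have X20 : forall i w, X2 i 0 w = 0 by move=> i; case: (hX2.1 i).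
split; first exact: (rect_pre_meas A0 m hX1 hY1 mA).
split; first exact: (rect_pre_meas A0 m hX2 hY2 mA).
case: (pselect (forall c, A0 c 0)) => h.
- by rewrite (rect_prob1 _ hX1 hY1 hI1 mA h) (rect_prob1 _ hX2 hY2 hI2 mA h).
- by rewrite !rect_pre0 // !measure0.
Qed.

End bm.

Section ind.
Variables (R : realType) (n : nat).

Lemma gen_setT (T : Type) (G : set (set T)) : <<s G >> setT.
Proof.
have [h0 hC _] := @smallest_sigma_algebra T setT G.
suff : <<s G >> (setT `\` set0) by rewrite setD0.
exact: hC h0.
Qed.

Lemma indep3_p d (T : measurableType d) (P : probability T R)
  (Xp Xm : 'I_n -> R -> T -> R) (Y : R -> T -> R) :
  indep_family P (fun i : 'I_3 =>
    if val i == 0%N then vproc_gen Xp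
    else if val i == 1%N then vproc_gen Xm
    else proc_gen Y) -> indep2 P Xp Y.
Proof.
move=> hI E1 E2 h1 h2.
pose E (i : 'I_3) := if val i == 0%N then E1 else if val i == 1%N then setT else E2.
have := hI E.
rewrite !big_ord_recr big_ord0 /= probability_setT /= mul1r mulr1.
have -> : \bigcap_(i in [set: 'I_3]) E i = E1 `&` E2.
  apply/seteqP; split => w /=.
  - by move=> h; split; [apply: (h ord0) | apply: (h ord_max)].
  - by move=> [a b] [[|[|[|?]]] ?] _ //=.
apply; case=> [[|[|[|?]]] ?] //=; exact: gen_setT.
Qed.


Lemma indep3_m d (T : measurableType d) (P : probability T R)
  (Xp Xm : 'I_n -> R -> T -> R) (Y : R -> T -> R) :
  indep_family P (fun i : 'I_3 =>
    if val i == 0%N then vproc_gen Xp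
    else if val i == 1%N then vproc_gen Xm
    else proc_gen Y) -> indep2 P Xm Y.
Proof.
move=> hI E1 E2 h1 h2.
pose E (i : 'I_3) := if val i == 0%N then setT else if val i == 1%N then E1 else E2.
have := hI E.
rewrite !big_ord_recr big_ord0 /= probability_setT /= !mul1r.
have -> : \bigcap_(i in [set: 'I_3]) E i = E1 `&` E2.
  apply/seteqP; split => w /=.
  - move=> h; split; [apply: (h (Ordinal (isT : (1 < 3)%N))) | apply: (h ord_max)] => //.
  - by move=> [a b] [[|[|[|?]]] ?] _ //=.
apply; case=> [[|[|[|?]]] ?] //=; exact: gen_setT.
Qed.

Lemma indep2_of d (T : measurableType d) (P : probability T R)
  (X : 'I_n -> R -> T -> R) (Y : R -> T -> R) :
  indep_family P (fun i : 'I_2 =>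
    if val i == 0%N then vproc_gen X else proc_gen Y) -> indep2 P X Y.
Proof.
move=> hI E1 E2 h1 h2.
pose E (i : 'I_2) := if val i == 0%N then E1 else E2.
have := hI E.
rewrite !big_ord_recr big_ord0 /= !mul1r.
have -> : \bigcap_(i in [set: 'I_2]) E i = E1 `&` E2.
  apply/seteqP; split => w /=.
  - by move=> h; split; [apply: (h ord0) | apply: (h ord_max)].
  - by move=> [a b] [[|[|?]] ?] _ //=.
by apply; case=> [[|[|?]] ?] //=.
Qed.

End ind.

Lemma meas_lt {R : realType} {d} {T : measurableType d} (f g : T -> R) :
  measurable_fun setT f -> measurable_fun setT g -> measurable [set x | f x < g x].
Proof.
move=> mf mg; have := measurable_fun_ltr mf mg measurableT (_ : measurable [set true]).
by rewrite setTI; apply.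
Qed.

Lemma meas_const {d} {T : measurableType d} (p : Prop) : measurable [set _ : T | p].
Proof.
case: (pselect p) => h.
- by rewrite (_ : [set _ | p] = setT) //; apply/seteqP; split.
- by rewrite (_ : [set _ | p] = set0) //; apply/seteqP; split.
Qed.

Lemma bigcap_count_meas {d} {T : measurableType d} (I : countType) (F : I -> set T) :
  (forall i, measurable (F i)) -> measurable (\bigcap_(i in [set: I]) F i).
Proof.
move=> mF.
pose G k := if (unpickle k : option I) is Some i then F i else setT.
have -> : \bigcap_(i in [set: I]) F i = \bigcap_k G k.
  apply/seteqP; split => w /= h.
  - by move=> k _; rewrite /G; case: (unpickle k) => // i; apply: h.
  - by move=> i _; have := h (pickle i) Logic.I; rewrite /G pickleK.
apply: bigcapT_measurable => k; rewrite /G; case: (unpickle k) => //.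
Qed.

Section sem.
Variables (R : realType) (n : nat) (D : set 'rV[R]_n) (z : 'rV[R]_n) (t : R).
Local Notation Om := (Om R n).

Definition vecw (w : Om) s : 'rV[R]_n := \row_i w (Some i) s.

Definition Cset (sg : R -> R) : set Om :=
  [set w | exists k : nat, forall m j m' j' : nat, dy R m' j' <= t ->
     dy R m j < sg (w None (dy R m' j')) -> good D k (z + vecw w (dy R m j))].

Local Notation MU := (g_sigma_algebraType (@UU R n)).

Lemma coordU c m j : measurable_fun setT (fun w : MU => w c (dy R m j)).
Proof. move=> _ A mA; rewrite setTI; exact: coord_UU. Qed.

Lemma good_meas k m j :
  measurable [set w : MU | good D k (z + vecw w (dy R m j))].
Proof.
have -> : [set w : MU | good D k (z + vecw w (dy R m j))] =
  \bigcap_(q in [set: {ffun 'I_n -> int}]) ([set w : MU |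
     (forall i, `|(z + vecw w (dy R m j)) ord0 i - gq R k q ord0 i| < (2 ^+ k)^-1) ->
     box (gq R k q) (2 * (2 ^+ k)^-1) `<=` D]).
  by apply/seteqP; split => w /= h q; [move=> _; apply: h | apply: h].
apply: bigcap_count_meas => q.
case: (pselect (box (gq R k q) (2 * (2 ^+ k)^-1) `<=` D)) => hb.
  by rewrite (_ : [set w | _] = setT) //; apply/seteqP; split => w //= _ _.
rewrite (_ : [set w | _] = ~` \bigcap_(i in [set: 'I_n])
   [set w : MU | `|z ord0 i + w (Some i) (dy R m j) - gq R k q ord0 i| < (2 ^+ k)^-1]).
  apply: measurableC; apply: fin_bigcap_measurable; first exact: finite_finset.
  move=> i _; apply: (meas_lt _ (measurable_cst _)).
  apply: measurableT_comp => //.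
  apply: measurable_funB; last exact: measurable_cst.
  apply: measurable_funD; first exact: measurable_cst.
  exact: coordU.
apply/seteqP; split => w /= h.
- move=> hall; apply: hb; apply: h => i; move: (hall i Logic.I) => /=.
  by rewrite !mxE.
- move=> hall; exfalso; apply: h => i _ /=; move: (hall i).
  by rewrite !mxE.
Qed.


Definition Piece sg k m j m' j' : set Om :=
  [set w | dy R m' j' <= t -> dy R m j < sg (w None (dy R m' j')) ->
     good D k (z + vecw w (dy R m j))].

Lemma Piece_meas sg k m j m' j' : measurable_fun setT sg ->
  measurable (Piece sg k m j m' j' : set MU).
Proof.
move=> msg.
case: (pselect (dy R m' j' <= t)) => ht; last first.
  by rewrite (_ : Piece _ _ _ _ _ _ = setT) //; apply/seteqP; split => w //= _.
rewrite (_ : Piece _ _ _ _ _ _ = ~` [set w : MU | dy R m j < sg (w None (dy R m' j'))]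
    `|` [set w : MU | good D k (z + vecw w (dy R m j))]).
  apply: measurableU; last exact: good_meas.
  apply: measurableC; apply: meas_lt; first exact: measurable_cst.
  exact: (measurableT_comp msg (coordU None m' j')).
apply/seteqP; split => w /= h.
- by case: (pselect (dy R m j < sg (w None (dy R m' j')))) => h2;
    [right; exact: h | left].
- by move=> _ h2; case: h.
Qed.

Lemma Cset_meas sg : measurable_fun setT sg -> <<s @UU R n >> (Cset sg).
Proof.
move=> msg.
suff : measurable (Cset sg : set MU) by [].
have -> : Cset sg = \bigcup_k \bigcap_m \bigcap_j \bigcap_m' \bigcap_j'
    Piece sg k m j m' j'.
  apply/seteqP; split => w /=.
  - by move=> [k h]; exists k => // m _ j _ m' _ j' _; exact: h.
  - by move=> [k _ h]; exists k => m j m' j'; exact: h.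
apply: bigcupT_measurable => k; apply: bigcapT_measurable => m.
apply: bigcapT_measurable => j; apply: bigcapT_measurable => m'.
apply: bigcapT_measurable => j'; exact: Piece_meas.
Qed.

End sem.

Section sem2.
Variables (R : realType) (n : nat) (D : set 'rV[R]_n) (z : 'rV[R]_n) (t : R).

Definition Fp (f : 'I_n -> R -> R) s : 'rV[R]_n := z + \row_i f i s.

Definition Sem (f : 'I_n -> R -> R) (g : R -> R) :=
  forall u, 0 <= u <= t -> forall s, 0 <= s <= g u -> D (Fp f s).

Lemma Fcont (f : 'I_n -> R -> R) :
  (forall i, {within `[0, +oo[, continuous (f i)}) ->
  forall s, 0 <= s -> forall e, 0 < e -> exists2 d, 0 < d &
    forall i s', 0 <= s' -> `|s - s'| < d -> `|Fp f s ord0 i - Fp f s' ord0 i| < e.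
Proof.
move=> hf s s0 e e0.
pose Q i d := forall s', 0 <= s' -> `|s - s'| < d ->
   `|Fp f s ord0 i - Fp f s' ord0 i| < e.
have [d d0 hd] : exists2 d, 0 < d & forall i, Q i d.
  apply: fin_delta.
  - move=> i d d' d'0 dd' h s' s'0 ss'; apply: h => //; exact: lt_le_trans ss' dd'.
  - move=> i.
    have sA : `[0, +oo[%classic s by rewrite /= in_itv /= s0.
    have [d d0 hd] := cont_eps (hf i) sA e0.
    exists d => // s' s'0 ss'; rewrite /Fp !mxE opprD addrACA subrr add0r.
    by apply: hd => //; rewrite /= in_itv /= s'0.
by exists d => // i; exact: hd.
Qed.

Lemma Fp0 (f : 'I_n -> R -> R) : (forall i, f i 0 = 0) -> Fp f 0 = z.
Proof.
move=> h; rewrite /Fp; apply/matrixP => a b; rewrite !mxE h addr0 //.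
Qed.


Definition Ck (f : 'I_n -> R -> R) (g : R -> R) :=
  exists k : nat, forall m j m' j' : nat, dy R m' j' <= t ->
     dy R m j < g (dy R m' j') -> good D k (Fp f (dy R m j)).

Lemma C_to_Sem (f : 'I_n -> R -> R) (g : R -> R) :
  (forall i, {within `[0, +oo[, continuous (f i)}) -> (forall i, f i 0 = 0) ->
  {within `[0, +oo[, continuous g} -> g 0 = 0 -> D z ->
  Ck f g -> Sem f g.
Proof.
move=> hf f0 hg g0 Dz [k hk] u /andP[u0 ut] s /andP[s0 sgu].
case: (eqVneq s 0) => [->|sn0]; first by rewrite Fp0.
have s_pos : 0 < s by rewrite lt_neqAle eq_sym sn0 s0.
have r0 : 0 < (2 ^+ k : R)^-1 by rewrite invr_gt0 pow2_gt0.
have [d d0 hd] := Fcont hf s0 r0.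
have hm0 : 0 <= Num.max 0 (s - d) by rewrite le_max lexx.
have hm1 : Num.max 0 (s - d) < s by rewrite gt_max s_pos /= ltrBlDr ltrDl.
have [m [j /andP[h1 h2]]] := dy_dense hm0 hm1.
move: h1; rewrite gt_max => /andP[h1a h1b].
have u_pos : 0 < u.
  rewrite lt_neqAle u0 andbT; apply/eqP => u00.
  by move: sgu; rewrite -u00 g0 => /(lt_le_trans s_pos); rewrite ltxx.
have e'0 : 0 < g u - dy R m j by rewrite subr_gt0 (lt_le_trans h2).
have uA : `[0, +oo[%classic u by rewrite /= in_itv /= u0.
have [d' d'0 hd'] := cont_eps hg uA e'0.
have hm2 : 0 <= Num.max 0 (u - d') by rewrite le_max lexx.
have hm3 : Num.max 0 (u - d') < u by rewrite gt_max u_pos /= ltrBlDr ltrDl.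
have [m' [j' /andP[h3 h4]]] := dy_dense hm2 hm3.
move: h3; rewrite gt_max => /andP[h3a h3b].
have hlt : dy R m j < g (dy R m' j').
  have : `|g u - g (dy R m' j')| < g u - dy R m j.
    apply: hd'; first by rewrite /= in_itv /= ltW.
    rewrite ger0_norm ?subr_ge0 ?ltW //; lra.
  rewrite ltr_norml => /andP[_]; lra.
have gd := hk m j m' j' (ltW (lt_le_trans h4 ut)) hlt.
apply: (good_near gd) => i.
rewrite distrC; apply: hd; first exact: ltW.
rewrite ger0_norm ?subr_ge0 ?ltW //; lra.
Qed.

Lemma Sem_to_C (f : 'I_n -> R -> R) (g : R -> R) :
  open D -> 0 < t ->
  (forall i, {within `[0, +oo[, continuous (f i)}) ->
  {within `[0, +oo[, continuous g} -> g 0 = 0 ->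
  Sem f g -> Ck f g.
Proof.
move=> oD t0 hf hg g0 hS.
have hg' : {within `[0, t], continuous g}.
  apply: continuous_subspaceW hg => x; rewrite /= !in_itv /= => /andP[-> _].
  by [].
have [c c_in cmax] := EVT_max (ltW t0) hg'.
have [c0 ct] : 0 <= c /\ c <= t by move: c_in; rewrite in_itv /= => /andP[].
have M0 : 0 <= g c.
  by rewrite -g0; apply: cmax; rewrite in_itv /= lexx ltW.
have hD : forall s, 0 <= s <= g c -> D (Fp f s).
  by apply: hS; rewrite c0 ct.
have hc : forall s, 0 <= s <= g c -> forall e, 0 < e -> exists2 d, 0 < d &
      forall s', 0 <= s' <= g c -> `|s - s'| < d ->
        forall i, `|Fp f s ord0 i - Fp f s' ord0 i| < e.
  move=> s /andP[s0 _] e e0; have [d d0 hd] := Fcont hf s0 e0.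
  by exists d => // s' /andP[s'0 _] ss' i; apply: hd.
have [e e0 he] := margin oD M0 hD hc.
have [k hk] := margin_k e0.
exists k => m j m' j' ht hlt.
apply: good_of_margin => x hx.
have hdm : 0 <= dy R m j <= g c.
  rewrite dy_ge0 /=; apply: ltW; apply: (lt_le_trans hlt); apply: cmax.
  by rewrite in_itv /= dy_ge0.
apply: (he _ hdm) => i; exact: lt_le_trans (hx i) hk.
Qed.

End sem2.

Section paths.
Variable R : realType.

Lemma comp_within (A : set R) (y sg : R -> R) : continuous sg ->
  {within A, continuous y} -> {within A, continuous (sg \o y)}.
Proof.
move=> csg cy x; exact: (continuous_comp (cy x) (csg _)).
Qed.

Lemma ivt0 (g : R -> R) : {within `[0, +oo[, continuous g} -> g 0 = 0 ->
  forall u s, 0 <= u -> 0 <= s <= g u -> exists2 u', 0 <= u' <= u & g u' = s.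
Proof.
move=> cg g0 u s u0 /andP[s0 su].
have cg' : {within `[0, u], continuous g}.
  apply: continuous_subspaceW cg => x; rewrite /= !in_itv /= => /andP[-> _].
  by [].
have gu0 : 0 <= g u := le_trans s0 su.
have hv : Num.min (g 0) (g u) <= s <= Num.max (g 0) (g u).
  by rewrite g0 ge_min s0 /= le_max su orbT.
have [c c_in gc] := IVT u0 cg' hv.
by exists c => //; move: c_in; rewrite in_itv.
Qed.

Lemma hcont (a b : R -> R) : {within `[0, +oo[, continuous a} ->
  {within `[0, +oo[, continuous b} -> a 0 = 0 -> b 0 = 0 ->
  forall y0 e, 0 < e -> exists2 d, 0 < d & forall y, `|y0 - y| < d ->
   `|(if 0 <= y0 then a y0 else b (- y0)) - (if 0 <= y then a y else b (- y))| < e.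
Proof.
move=> ca cb a0 b0 y0 e e0.
have [y0p|y0n|->] := ltgtP y0 0.
- have yA : `[0, +oo[%classic (- y0) by rewrite /= in_itv /= oppr_ge0 ltW.
  have [d d0 hd] := cont_eps cb yA e0.
  exists (Num.min d (- y0)); first by rewrite lt_min d0 oppr_gt0.
  move=> y; rewrite lt_min => /andP[h1 h2].
  have yn : y < 0 by move: h2; rewrite ltr_norml => /andP[h3 h4]; lra.
  have -> : (0 <= y) = false by rewrite leNgt yn.
  apply: hd.
    by rewrite /= in_itv /= oppr_ge0 ltW.
  by rewrite opprK addrC distrC.
- have yA : `[0, +oo[%classic y0 by rewrite /= in_itv /= ltW.
  have [d d0 hd] := cont_eps ca yA e0.
  exists (Num.min d y0); first by rewrite lt_min d0.
  move=> y; rewrite lt_min => /andP[h1 h2].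
  have yp : 0 < y by move: h2; rewrite ltr_norml => /andP[h3 h4]; lra.
  rewrite (ltW yp); apply: hd => //.
  by rewrite /= in_itv /= ltW.
- have zA : `[0, +oo[%classic (0:R) by rewrite /= in_itv /= lexx.
  have [da da0 hda] := cont_eps ca zA e0.
  have [db db0 hdb] := cont_eps cb zA e0.
  exists (Num.min da db); first by rewrite lt_min da0 db0.
  move=> y; rewrite lt_min => /andP[h1 h2].
  case: (leP 0 y) => hy.
  + by apply: hda => //; rewrite /= in_itv /= hy.
  + rewrite a0 -b0; apply: hdb; first by rewrite /= in_itv /= oppr_ge0 ltW.
    by move: h2; rewrite !sub0r opprK normrN.
Qed.


Lemma cont_after n (D : set 'rV[R]_n) (z : 'rV[R]_n) t (H : 'I_n -> R -> R)
  (y : R -> R) : open D -> 0 < t -> {within `[0, +oo[, continuous y} ->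
  (forall i y0 e, 0 < e -> exists2 d, 0 < d & forall y', `|y0 - y'| < d ->
     `|H i y0 - H i y'| < e) ->
  D (z + \row_i H i (y t)) ->
  exists2 del, 0 < del & forall u, t <= u <= t + del -> D (z + \row_i H i (y u)).
Proof.
move=> oD t0 cy cH Dt.
have [e e0 he] := open_box oD Dt.
pose Q i d := forall u, t <= u -> `|t - u| < d -> `|H i (y t) - H i (y u)| < e.
have [d d0 hd] : exists2 d, 0 < d & forall i, Q i d.
  apply: fin_delta.
  - move=> i d d' d'0 dd' h u tu tud; apply: h => //; exact: lt_le_trans tud dd'.
  - move=> i; have [d1 d10 hd1] := cH i (y t) e e0.
    have tA : `[0, +oo[%classic t by rewrite /= in_itv /= ltW.
    have [d2 d20 hd2] := cont_eps cy tA d10.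
    exists d2 => // u tu tud; apply: hd1; apply: hd2 => //.
    by rewrite /= in_itv /= (le_trans (ltW t0) tu).
exists (d / 2); first by rewrite divr_gt0.
move=> u /andP[tu ud]; apply: he => i; rewrite !mxE opprD addrACA subrr add0r.
apply: (hd i u tu).
rewrite ler0_norm ?subr_le0 //; lra.
Qed.

Lemma sem_union n (D : set 'rV[R]_n) (z : 'rV[R]_n) t (fp fm : 'I_n -> R -> R)
  (y : R -> R) :
  Sem D z t fp y -> Sem D z t fm (fun u => - y u) ->
  Sem D z t fp (fun u => `|y u|) \/ Sem D z t fm (fun u => `|y u|).
Proof.
move=> hp hm.
case: (pselect (Sem D z t fp (fun u => `|y u|))) => h; [by left | right].
move=> u2 hu2 s2 /andP[s20 s2y].
case: (leP (y u2) 0) => yu2.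
  apply: (hm u2 hu2); rewrite s20 /=; by rewrite ler0_norm in s2y.
rewrite gtr0_norm // in s2y.
apply: contrapT => nD; apply: h => u1 hu1 s1 /andP[s10 s1y].
case: (leP 0 (y u1)) => yu1.
  by apply: (hp u1 hu1); rewrite s10 /=; rewrite ger0_norm in s1y.
rewrite ltr0_norm // in s1y.
case: (leP s2 (- y u1)) => hs2.
  by exfalso; apply: nD; apply: (hm u1 hu1); rewrite s20.
apply: (hp u2 hu2); rewrite s10 /=.
apply: (le_trans _ s2y); apply: ltW; exact: (le_lt_trans s1y hs2).
Qed.

Lemma iter_all n (D : set 'rV[R]_n) (z : 'rV[R]_n) t (fp fm : 'I_n -> R -> R)
  (y : R -> R) :
  (forall i, fp i 0 = 0) -> (forall i, fm i 0 = 0) ->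
  {within `[0, +oo[, continuous y} -> y 0 = 0 ->
  (forall u, 0 <= u <= t ->
     D (z + (if 0 <= y u then \row_i fp i (y u) else \row_i fm i (- y u)))) <->
  Sem D z t fp y /\ Sem D z t fm (fun u => - y u).
Proof.
move=> fp0 fm0 cy y0; split.
- move=> h; split.
  + move=> u /andP[u0 ut] s hs.
    have [u' /andP[u'0 u'u] yu'] := ivt0 cy y0 u0 hs.
    have := h u' ltac:(by rewrite u'0 (le_trans u'u ut)).
    by rewrite yu' (proj1 (andP hs)).
  + move=> u /andP[u0 ut] s hs.
    have cy' : {within `[0, +oo[, continuous (fun u => - y u)}.
      exact: (comp_within (@oppr_continuous R R) cy).
    have [u' /andP[u'0 u'u] yu'] := ivt0 cy' ltac:(by rewrite /= y0 oppr0) u0 hs.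
    have := h u' ltac:(by rewrite u'0 (le_trans u'u ut)).
    case: ifP => hy.
    * have ys : y u' = 0.
        by apply/eqP; rewrite eq_le hy andbT -oppr_ge0 yu' (proj1 (andP hs)).
      have s0 : s = 0 by rewrite -yu' ys oppr0.
      rewrite ys s0 => hD.
      have := Fp0 z fp0; have := Fp0 z fm0; rewrite /Fp => -> e.
      by rewrite e in hD.
    * by rewrite yu'.
- move=> [hp hm] u hu; case: ifP => hy.
  + by apply: (hp u hu); rewrite hy lexx.
  + apply: (hm u hu); rewrite lexx andbT oppr_ge0; apply: ltW.
    by rewrite ltNge hy.
Qed.

Lemma btbm_all n (D : set 'rV[R]_n) (z : 'rV[R]_n) t (f : 'I_n -> R -> R)
  (y : R -> R) :
  {within `[0, +oo[, continuous y} -> y 0 = 0 ->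
  (forall u, 0 <= u <= t -> D (z + \row_i f i `|y u|)) <->
  Sem D z t f (fun u => `|y u|).
Proof.
move=> cy y0; split.
- move=> h u /andP[u0 ut] s hs.
  have cy' : {within `[0, +oo[, continuous (fun u => `|y u|)}.
    exact: (comp_within (@norm_continuous R R) cy).
  have [u' /andP[u'0 u'u] yu'] := ivt0 cy' ltac:(by rewrite /= y0 normr0) u0 hs.
  have := h u' ltac:(by rewrite u'0 (le_trans u'u ut)).
  by rewrite yu'.
- move=> hs u hu; apply: (hs u hu); by rewrite normr_ge0 lexx.
Qed.

End paths.

Section fin.
Variable R : realType.

Lemma abs_if (s : R) (F : R -> R) : F `|s| = if 0 <= s then F s else F (- s).
Proof. by case: (leP 0 s) => h; [rewrite ger0_norm | rewrite ltr0_norm]. Qed.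

Lemma Cset_Ck {T : Type} n (D : set 'rV[R]_n) (z : 'rV[R]_n) t sg
  (X : 'I_n -> R -> T -> R) (Y : R -> T -> R) w :
  Cset D z t sg (Phi X Y w) <-> Ck D z t (fun i s => X i s w) (fun u => sg (Y u w)).
Proof. by []. Qed.

Lemma surv_from_all {T : Type} n (D : set 'rV[R]_n) (z : 'rV[R]_n)
  (W : R -> T -> 'rV[R]_n) t w (H : 'I_n -> R -> R) (y : R -> R) :
  open D -> 0 < t -> {within `[0, +oo[, continuous y} ->
  (forall i y0 e, 0 < e -> exists2 d, 0 < d & forall y', `|y0 - y'| < d ->
     `|H i y0 - H i y'| < e) ->
  (forall u, W u w = z + \row_i H i (y u)) ->
  (forall u, 0 <= u <= t -> D (W u w)) -> survives D W t w.
Proof.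
move=> oD t0 cy cH hW h.
have Dt : D (z + \row_i H i (y t)) by rewrite -hW; apply: h; rewrite lexx ltW.
have [del del0 hdel] := cont_after oD t0 cy cH Dt.
apply: (surv_of del0) => u /andP[u0 utd].
case: (leP u t) => ut; first by apply: h; rewrite u0 ut.
by rewrite hW; apply: hdel; rewrite utd ltW.
Qed.

Lemma iter_surv_eq d (T : measurableType d) (P : probability T R) n
  (D : set 'rV[R]_n) (z : 'rV[R]_n) t (Xp Xm : 'I_n -> R -> T -> R) (Y : R -> T -> R) :
  open D -> D z -> 0 < t -> is_BM P Xp -> is_BM P Xm -> is_BM1 P Y ->
  survives D (iterated_BM Xp Xm Y z) t =
  Phi Xp Y @^-1` Cset D z t (fun x => x) `&` Phi Xm Y @^-1` Cset D z t (fun x => - x).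
Proof.
move=> oD Dz t0 [hXp _] [hXm _] hY.
have [Y0 _ cY _ _] := hY.
apply/seteqP; split => w.
- have cXp : forall i, {within `[0, +oo[, continuous (fun s => Xp i s w)}.
    by move=> i; case: (hXp i).
  have cXm : forall i, {within `[0, +oo[, continuous (fun s => Xm i s w)}.
    by move=> i; case: (hXm i).
  have Xp0 : forall i, Xp i 0 w = 0 by move=> i; case: (hXp i).
  have Xm0 : forall i, Xm i 0 w = 0 by move=> i; case: (hXm i).
  move=> hs.
  have hall := surv_in (or_intror hs).
  have [h1 h2] := (iter_all D z t (fp := fun i s => Xp i s w) (fm := fun i s => Xm i s w)
     Xp0 Xm0 (cY w) (Y0 w)).1 hall.
  split.
  + apply/Cset_Ck; apply: Sem_to_C; [exact: oD|exact: t0|exact: cXp|exact: (cY w)|exact: Y0|exact: h1].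
  + apply/Cset_Ck; apply: Sem_to_C; [exact: oD|exact: t0|exact: cXm| |by rewrite /= Y0 oppr0|exact: h2].
    exact: (comp_within (@oppr_continuous R R) (cY w)).
- move=> [/= hp hm].
  have cXp : forall i, {within `[0, +oo[, continuous (fun s => Xp i s w)}.
    by move=> i; case: (hXp i).
  have cXm : forall i, {within `[0, +oo[, continuous (fun s => Xm i s w)}.
    by move=> i; case: (hXm i).
  have Xp0 : forall i, Xp i 0 w = 0 by move=> i; case: (hXp i).
  have Xm0 : forall i, Xm i 0 w = 0 by move=> i; case: (hXm i).
  have sp : Sem D z t (fun i s => Xp i s w) (fun u => Y u w).
    apply: C_to_Sem; [exact: cXp|exact: Xp0|exact: (cY w)|exact: Y0|exact: Dz|].
    exact: hp.
  have sm : Sem D z t (fun i s => Xm i s w) (fun u => - Y u w).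
    apply: C_to_Sem; [exact: cXm|exact: Xm0| |by rewrite /= Y0 oppr0|exact: Dz|].
    * exact: (comp_within (@oppr_continuous R R) (cY w)).
    * exact: hm.
  have hall := (iter_all D z t (fp := fun i s => Xp i s w) (fm := fun i s => Xm i s w)
     Xp0 Xm0 (cY w) (Y0 w)).2 (conj sp sm).
  apply: (surv_from_all (H := fun i s => if 0 <= s then Xp i s w else Xm i (- s) w)
    oD t0 (cY w)).
  + move=> i; exact: (hcont (cXp i) (cXm i) (Xp0 i) (Xm0 i)).
  + move=> u; rewrite /iterated_BM; congr (_ + _).
    by case: ifP => h; apply/matrixP => a b; rewrite !mxE.
  + exact: hall.
Qed.


Lemma habs (a : R -> R) : {within `[0, +oo[, continuous a} ->
  forall (y0 e : R), 0 < e -> exists2 d, 0 < d & forall y' : R, `|y0 - y'| < d ->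
   `|a (`|y0|) - a (`|y'|)| < e.
Proof.
move=> ca y0 e e0.
have yA : `[0, +oo[%classic `|y0| by rewrite /= in_itv /= normr_ge0.
have [d d0 hd] := cont_eps ca yA e0.
exists d => // y' hy; apply: hd; first by rewrite /= in_itv /= normr_ge0.
exact: le_lt_trans (ler_dist_dist _ _) hy.
Qed.

Lemma btbm_surv_eq d (T : measurableType d) (P : probability T R) n
  (D : set 'rV[R]_n) (z : 'rV[R]_n) t (X : 'I_n -> R -> T -> R) (Y : R -> T -> R) :
  open D -> D z -> 0 < t -> is_BM P X -> is_BM1 P Y ->
  survives D (BTBM X Y z) t = Phi X Y @^-1` Cset D z t (fun x => `|x|).
Proof.
move=> oD Dz t0 [hX _] hY.
have [Y0 _ cY _ _] := hY.
apply/seteqP; split => w.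
- have cX : forall i, {within `[0, +oo[, continuous (fun s => X i s w)}.
    by move=> i; case: (hX i).
  move=> hs.
  have hall := surv_in (or_intror hs).
  have h1 := (btbm_all D z t (fun i s => X i s w) (cY w) (Y0 w)).1 hall.
  apply/Cset_Ck; apply: Sem_to_C; [exact: oD|exact: t0|exact: cX| |by rewrite /= Y0 normr0|exact: h1].
  exact: (comp_within (@norm_continuous R R) (cY w)).
- move=> /= hp.
  have cX : forall i, {within `[0, +oo[, continuous (fun s => X i s w)}.
    by move=> i; case: (hX i).
  have X0 : forall i, X i 0 w = 0 by move=> i; case: (hX i).
  have sp : Sem D z t (fun i s => X i s w) (fun u => `|Y u w|).
    apply: C_to_Sem; [exact: cX|exact: X0| |by rewrite /= Y0 normr0|exact: Dz|].
    * exact: (comp_within (@norm_continuous R R) (cY w)).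
    * exact: hp.
  have hall := (btbm_all D z t (fun i s => X i s w) (cY w) (Y0 w)).2 sp.
  apply: (surv_from_all (H := fun i s => X i `|s| w) oD t0 (cY w)).
  + move=> i; exact: (habs (cX i)).
  + by move=> u.
  + exact: hall.
Qed.


Lemma union_sub d (T : measurableType d) (P : probability T R) n
  (D : set 'rV[R]_n) (z : 'rV[R]_n) t (Xp Xm : 'I_n -> R -> T -> R) (Y : R -> T -> R) :
  open D -> D z -> 0 < t -> is_BM P Xp -> is_BM P Xm -> is_BM1 P Y ->
  Phi Xp Y @^-1` Cset D z t (fun x => x) `&` Phi Xm Y @^-1` Cset D z t (fun x => - x)
  `<=` Phi Xp Y @^-1` Cset D z t (fun x => `|x|) `|`
       Phi Xm Y @^-1` Cset D z t (fun x => `|x|).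
Proof.
move=> oD Dz t0 [hXp _] [hXm _] hY w [/= hp hm].
have [Y0 _ cY _ _] := hY.
have cXp : forall i, {within `[0, +oo[, continuous (fun s => Xp i s w)}.
  by move=> i; case: (hXp i).
have cXm : forall i, {within `[0, +oo[, continuous (fun s => Xm i s w)}.
  by move=> i; case: (hXm i).
have Xp0 : forall i, Xp i 0 w = 0 by move=> i; case: (hXp i).
have Xm0 : forall i, Xm i 0 w = 0 by move=> i; case: (hXm i).
have sp : Sem D z t (fun i s => Xp i s w) (fun u => Y u w).
  apply: C_to_Sem; [exact: cXp|exact: Xp0|exact: (cY w)|exact: Y0|exact: Dz|].
  exact: hp.
have sm : Sem D z t (fun i s => Xm i s w) (fun u => - Y u w).
  apply: C_to_Sem; [exact: cXm|exact: Xm0| |by rewrite /= Y0 oppr0|exact: Dz|].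
  * exact: (comp_within (@oppr_continuous R R) (cY w)).
  * exact: hm.
have ca : {within `[0, +oo[, continuous (fun u => `|Y u w|)}.
  exact: (comp_within (@norm_continuous R R) (cY w)).
case: (sem_union sp sm) => h; [left|right]; apply/Cset_Ck.
- apply: Sem_to_C; [exact: oD|exact: t0|exact: cXp|exact: ca|by rewrite /= Y0 normr0|exact: h].
- apply: Sem_to_C; [exact: oD|exact: t0|exact: cXm|exact: ca|by rewrite /= Y0 normr0|exact: h].
Qed.

End fin.

Unset Implicit Arguments.
Set Strict Implicit.

Theorem theorem1p3 (R : realType) (n : nat) (D : set 'rV[R]_n)
  (d1 : measure_display) (T1 : measurableType d1) (P1 : probability T1 R)
  (Xp Xm : 'I_n -> R -> T1 -> R) (Y : R -> T1 -> R)
  (d2 : measure_display) (T2 : measurableType d2) (P2 : probability T2 R)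
  (X : 'I_n -> R -> T2 -> R) (Y1 : R -> T2 -> R) :
  open D -> connected D ->
  is_BM P1 Xp -> is_BM P1 Xm -> is_BM1 P1 Y ->
  indep_family P1 (fun i : 'I_3 =>
    if val i == 0%N then vproc_gen Xp
    else if val i == 1%N then vproc_gen Xm
    else proc_gen Y) ->
  is_BM P2 X -> is_BM1 P2 Y1 ->
  indep_family P2 (fun i : 'I_2 =>
    if val i == 0%N then vproc_gen X else proc_gen Y1) ->
  forall (z : 'rV[R]_n) (t : R), D z -> 0 < t ->
  (P1 (survives D (iterated_BM Xp Xm Y z) t)
     <= 2%:E * P2 (survives D (BTBM X Y1 z) t))%E.
Proof.
move=> oD cD hXp hXm hY hI1 hX hY1 hI2 z t Dz t0.
have iP := indep3_p hI1.
have iM := indep3_m hI1.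
have i2 := indep2_of hI2.
have msid : measurable_fun setT (fun x : R => x) by exact: measurable_id.
have msneg : measurable_fun setT (fun x : R => - x).
  exact: continuous_measurable_fun (@oppr_continuous R R).
have msabs : measurable_fun setT (fun x : R => `|x|) by exact: normr_measurable.
have LA := law_UU hXp hY iP hX hY1 i2 (Cset_meas D z t msabs).
have LB := law_UU hXm hY iM hX hY1 i2 (Cset_meas D z t msabs).
have Lid := law_UU hXp hY iP hX hY1 i2 (Cset_meas D z t msid).
have Lneg := law_UU hXm hY iM hX hY1 i2 (Cset_meas D z t msneg).
rewrite (iter_surv_eq oD Dz t0 hXp hXm hY) (btbm_surv_eq oD Dz t0 hX hY1).
have sub := union_sub oD Dz t0 hXp hXm hY.
have mAB : measurable (Phi Xp Y @^-1` Cset D z t (fun x => x) `&`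
    Phi Xm Y @^-1` Cset D z t (fun x => - x)).
  by apply: measurableI; [exact: Lid.1 | exact: Lneg.1].
have mA' := LA.1.
have mB' := LB.1.
have mS := LA.2.1.
have mU : measurable (Phi Xp Y @^-1` Cset D z t (fun x => `|x|) `|`
    Phi Xm Y @^-1` Cset D z t (fun x => `|x|)) by apply: measurableU.
apply: (le_trans (le_measure P1 (mem_set mAB) (mem_set mU) sub)).
apply: (le_trans (measureU2 P1 mA' mB')).
set S := Phi X Y1 @^-1` Cset D z t (fun x => `|x|).
set A1 := Phi Xp Y @^-1` Cset D z t (fun x => `|x|).
set B1 := Phi Xm Y @^-1` Cset D z t (fun x => `|x|).
have -> : (P1 A1 + P1 B1 = P2 S + P2 S)%E.
  by congr (_ + _)%E; [exact: LA.2.2 | exact: LB.2.2].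
have -> : P2 S = (fine (P2 S))%:E by exact: Pfin.
rewrite -EFinD -EFinM lee_fin.
lra.
Qed.
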